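(* Let $n\ge2$ and let $\sum_{l=0}^\infty a_lu^l$ be a power series in the polar $n$-complex variable $u$ with polar $n$-complex coefficients $a_l=\sum_{p=0}^{n-1}h_pa_{lp}$. Put $A_{l+}=\sum_pa_{lp}$, $A_{lk}=\sum_pa_{lp}\cos(2\pi kp/n)$, $\tilde A_{lk}=\sum_pa_{lp}\sin(2\pi kp/n)$ for $k=1,\dots,\lfloor(n-1)/2\rfloor$, and for even $n$, $A_{l-}=\sum_p(-1)^pa_{lp}$. Suppose these quantities are nonzero for all large $l$ and that the limits $$c_+=\lim_{l\to\infty}\frac{|A_{l+}|}{|A_{l+1,+}|},\quad c_-=\lim_{l\to\infty}\frac{|A_{l-}|}{|A_{l+1,-}|}\ (n\text{ even}),\quad c_k=\lim_{l\to\infty}\frac{(A_{lk}^2+\tilde A_{lk}^2)^{1/2}}{(A_{l+1,k}^2+\tilde A_{l+1,k}^2)^{1/2}}$$ exist in $[0,\infty]$. Then the series converges absolutely (i.e. each of its $n$ real component series converges absolutely) at every $u$ with $|v_+|<c_+$, $|v_-|<c_-$ (for even $n$) and $\rho_k<c_k$ for all $k=1,\dots,\lfloor(n-1)/2\rfloor$.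
   Context: Polar $n$-complex numbers: $u=x_0+h_1x_1+\cdots+h_{n-1}x_{n-1}$, $x_j\in\mathbb{R}$, $h_0=1$, componentwise addition, bilinear multiplication $h_jh_k=h_{(j+k)\bmod n}$. For $u$: $v_+=\sum_px_p$; for even $n$, $v_-=\sum_p(-1)^px_p$; $v_k=\sum_px_p\cos(2\pi kp/n)$, $\tilde v_k=\sum_px_p\sin(2\pi kp/n)$, $\rho_k=\sqrt{v_k^2+\tilde v_k^2}$ for $k=1,\dots,\lfloor(n-1)/2\rfloor$. *)

(* Defs.v *)
From Stdlib Require Import Reals Lra Lia.
From Coquelicot Require Import Coquelicot.
Open Scope R_scope.

(* A polar n-complex number x_0 + h_1 x_1 + ... + h_{n-1} x_{n-1} is
   represented by its component function x : nat -> R; only the values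
   x 0, ..., x (n-1) are relevant. *)

Fixpoint sumR (n : nat) (f : nat -> R) : R :=
  match n with
  | O => 0
  | S m => sumR m f + f m
  end.

(* product: h_j h_m = h_{(j+m) mod n} *)
Definition nc_mul (n : nat) (x y : nat -> R) : nat -> R :=
  fun k => sumR n (fun j => sumR n (fun m =>
             if Nat.eqb ((j + m) mod n) k then x j * y m else 0)).

Definition nc_one : nat -> R := fun k => if Nat.eqb k 0 then 1 else 0.

Fixpoint nc_pow (n : nat) (u : nat -> R) (l : nat) : nat -> R :=
  match l with
  | O => nc_one
  | S m => nc_mul n u (nc_pow n u m)
  end.

Definition v_plus (n : nat) (x : nat -> R) : R := sumR n x.
Definition v_minus (n : nat) (x : nat -> R) : R :=
  sumR n (fun p => (-1) ^ p * x p).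
Definition v_k (n k : nat) (x : nat -> R) : R :=
  sumR n (fun p => x p * cos (2 * PI * INR k * INR p / INR n)).
Definition vt_k (n k : nat) (x : nat -> R) : R :=
  sumR n (fun p => x p * sin (2 * PI * INR k * INR p / INR n)).
Definition rho_k (n k : nat) (x : nat -> R) : R :=
  sqrt (v_k n k x ^ 2 + vt_k n k x ^ 2).

(* Main.v *)
Require Import Defs.
From Stdlib Require Import Reals Lra Lia.
From Coquelicot Require Import Coquelicot.
Open Scope R_scope.

Lemma sumR_ext m f g : (forall i, (i < m)%nat -> f i = g i) -> sumR m f = sumR m g.
Proof. induction m; simpl; intros H; auto. rewrite IHm by (intros; apply H; lia). rewrite H by lia; auto. Qed.
Lemma sumR_0 m : sumR m (fun _ => 0) = 0.
Proof. induction m; simpl; auto. rewrite IHm; ring. Qed.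
Lemma sumR_plus m f g : sumR m (fun i => f i + g i) = sumR m f + sumR m g.
Proof. induction m; simpl; auto. ring. rewrite IHm; ring. Qed.
Lemma sumR_mult_l m c f : sumR m (fun i => c * f i) = c * sumR m f.
Proof. induction m; simpl; auto. ring. rewrite IHm; ring. Qed.
Lemma sumR_mult_r m c f : sumR m (fun i => f i * c) = sumR m f * c.
Proof. induction m; simpl; auto. ring. rewrite IHm; ring. Qed.
Lemma sumR_exchange m p f : sumR m (fun i => sumR p (fun j => f i j)) = sumR p (fun j => sumR m (fun i => f i j)).
Proof. induction m; simpl. rewrite sumR_0; auto. rewrite IHm, <- sumR_plus. auto. Qed.
Lemma sumR_le m f g : (forall i, (i < m)%nat -> f i <= g i) -> sumR m f <= sumR m g.
Proof. induction m; simpl; intros H. lra. assert (H1 := H m (Nat.lt_succ_diag_r m)). assert (sumR m f <= sumR m g) by (apply IHm; intros; apply H; lia). lra. Qed.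
Lemma sumR_abs m f : Rabs (sumR m f) <= sumR m (fun i => Rabs (f i)).
Proof. induction m; simpl. rewrite Rabs_R0; lra. eapply Rle_trans. apply Rabs_triang. lra. Qed.
Lemma sumR_const1 m : sumR m (fun _ => 1) = INR m.
Proof. induction m; simpl sumR. reflexivity. rewrite IHm, S_INR; ring. Qed.
Lemma sumR_delta m s a : sumR m (fun r => (if Nat.eqb s r then a else 0)) = if Nat.ltb s m then a else 0.
Proof. induction m; simpl sumR. destruct (Nat.ltb_spec s 0); [lia|auto].
 rewrite IHm. destruct (Nat.ltb_spec s m), (Nat.eqb_spec s m), (Nat.ltb_spec s (S m)); try lia; ring. Qed.

Fixpoint sumC (m : nat) (f : nat -> C) : C :=
  match m with O => 0%C | S m => (sumC m f + f m)%C end.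
Lemma sumC_ext m f g : (forall i, (i < m)%nat -> f i = g i) -> sumC m f = sumC m g.
Proof. induction m; simpl; intros H; auto. rewrite IHm by (intros; apply H; lia). rewrite H by lia; auto. Qed.
Lemma sumC_0 m : sumC m (fun _ => 0%C) = 0%C.
Proof. induction m; simpl; auto. rewrite IHm; ring. Qed.
Lemma sumC_plus m f g : sumC m (fun i => f i + g i)%C = (sumC m f + sumC m g)%C.
Proof. induction m; simpl; auto. ring. rewrite IHm; ring. Qed.
Lemma sumC_mult_l m c f : sumC m (fun i => c * f i)%C = (c * sumC m f)%C.
Proof. induction m; simpl; auto. ring. rewrite IHm; ring. Qed.
Lemma sumC_mult_r m c f : sumC m (fun i => f i * c)%C = (sumC m f * c)%C.
Proof. induction m; simpl; auto. ring. rewrite IHm; ring. Qed.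
Lemma sumC_exchange m p f : sumC m (fun i => sumC p (fun j => f i j)) = sumC p (fun j => sumC m (fun i => f i j)).
Proof. induction m; simpl. rewrite sumC_0; auto. rewrite IHm, <- sumC_plus. auto. Qed.
Lemma sumC_pair m f g : sumC m (fun q => (f q, g q)) = (sumR m f, sumR m g).
Proof. induction m; simpl. reflexivity. rewrite IHm. reflexivity. Qed.
Lemma RtoC_sumR m f : RtoC (sumR m f) = sumC m (fun q => RtoC (f q)).
Proof. induction m; simpl. reflexivity. rewrite <- IHm, RtoC_plus. reflexivity. Qed.
Lemma sumC_delta m s a (g : nat -> C) : sumC m (fun r => RtoC (if Nat.eqb s r then a else 0) * g r)%C = if Nat.ltb s m then (RtoC a * g s)%C else 0%C.
Proof. induction m; simpl sumC. destruct (Nat.ltb_spec s 0); [lia|auto].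
 rewrite IHm. destruct (Nat.ltb_spec s m), (Nat.eqb_spec s m), (Nat.ltb_spec s (S m)); try lia; subst; try ring.
Qed.

Definition th (n k q : nat) : R := 2 * PI * INR k * INR q / INR n.
Definition ee (n k q : nat) : C := (cos (th n k q), sin (th n k q)).
Definition XX (n k : nat) (x : nat -> R) : C := (v_k n k x, vt_k n k x).

Lemma XX_sumC n k x : XX n k x = sumC n (fun q => RtoC (x q) * ee n k q)%C.
Proof.
  rewrite (sumC_ext _ _ (fun q => (x q * cos (th n k q), x q * sin (th n k q)))).
  - rewrite sumC_pair. reflexivity.
  - intros. unfold ee, RtoC, Cmult; simpl. f_equal; ring.
Qed.

Lemma th_add n k a b : (0 < n)%nat -> th n k (a + b) = th n k a + th n k b.
Proof. intros. unfold th. rewrite plus_INR. field. apply not_0_INR. lia. Qed.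

Lemma ee_add n k a b : (0 < n)%nat -> ee n k (a + b) = (ee n k a * ee n k b)%C.
Proof. intros. unfold ee, Cmult; simpl. rewrite th_add by auto. rewrite cos_plus, sin_plus. f_equal; ring. Qed.

Lemma ee_mod n k a : (0 < n)%nat -> ee n k (a mod n) = ee n k a.
Proof. intros Hn. assert (E : th n k a = th n k (a mod n) + 2 * INR (k * (a / n)) * PI).
  { unfold th. rewrite (Nat.div_mod a n) at 1 by lia. rewrite plus_INR, !mult_INR. field. apply not_0_INR. lia. }
  unfold ee. rewrite E, cos_period, sin_period. reflexivity. Qed.

Lemma XX_mul n k x y : (0 < n)%nat -> XX n k (nc_mul n x y) = (XX n k x * XX n k y)%C.
Proof.
  intros Hn. rewrite !XX_sumC. unfold nc_mul.
  rewrite (sumC_ext _ _ (fun r => sumC n (fun j => sumC n (fun m =>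
     RtoC (if Nat.eqb ((j + m) mod n) r then x j * y m else 0) * ee n k r)))%C).
  2:{ intros r _. rewrite RtoC_sumR, <- sumC_mult_r. apply sumC_ext. intros j _.
      rewrite RtoC_sumR, <- sumC_mult_r. reflexivity. }
  rewrite sumC_exchange.
  rewrite (sumC_ext _ _ (fun j => sumC n (fun m => RtoC (x j * y m) * (ee n k j * ee n k m)))%C).
  2:{ intros j _. rewrite sumC_exchange. apply sumC_ext. intros m _.
      rewrite sumC_delta. destruct (Nat.ltb_spec ((j + m) mod n) n).
      - rewrite ee_mod, ee_add by auto. reflexivity.
      - exfalso. assert (((j + m) mod n < n)%nat) by (apply Nat.mod_upper_bound; lia). lia. }
  rewrite <- sumC_mult_r. apply sumC_ext. intros j _. rewrite <- sumC_mult_l. apply sumC_ext. intros m _.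
  rewrite RtoC_mult. ring.
Qed.

Lemma XX_one n k : (0 < n)%nat -> XX n k nc_one = 1%C.
Proof.
  intros Hn. rewrite XX_sumC. unfold nc_one.
  rewrite (sumC_ext _ _ (fun q => RtoC (if Nat.eqb 0 q then 1 else 0) * ee n k q)%C).
  2:{ intros i _. rewrite Nat.eqb_sym. reflexivity. }
  rewrite sumC_delta. destruct (Nat.ltb_spec 0 n); [|lia].
  unfold ee. replace (th n k 0) with 0 by (unfold th; simpl; unfold Rdiv; ring).
  rewrite cos_0, sin_0. unfold RtoC, Cmult; simpl. f_equal; ring.
Qed.

Lemma XX_pow n k u l : (0 < n)%nat -> XX n k (nc_pow n u l) = Cpow (XX n k u) l.
Proof. intros Hn. induction l; simpl. apply XX_one; auto. rewrite XX_mul, IHl by auto. reflexivity. Qed.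

Lemma tele al m : 2 * sin (al / 2) * sumR m (fun k => cos (INR k * al)) = sin ((INR m - 1/2) * al) + sin (al / 2).
Proof.
  induction m; simpl sumR.
  - replace ((INR 0 - 1/2) * al) with (- (al/2)) by (simpl; field). rewrite sin_neg. ring.
  - rewrite Rmult_plus_distr_l, IHm.
    replace ((INR (S m) - 1/2) * al) with (INR m * al + al/2) by (rewrite S_INR; field).
    replace ((INR m - 1/2) * al) with (INR m * al - al/2) by field.
    rewrite sin_plus, sin_minus. ring.
Qed.

Lemma orth0 n d : (0 < d < n)%nat -> sumR n (fun k => cos (INR k * (2 * PI * INR d / INR n))) = 0.
Proof.
  intros Hd. set (al := 2 * PI * INR d / INR n).
  assert (Hn : INR n <> 0) by (apply not_0_INR; lia).
  assert (Hs : 0 < sin (al / 2)).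
  { apply sin_gt_0; unfold al.
    - assert (0 < INR d) by (apply lt_0_INR; lia). assert (0 < INR n) by (apply lt_0_INR; lia).
      assert (0 < PI) by apply PI_RGT_0.
      replace (2 * PI * INR d / INR n / 2) with (PI * INR d / INR n) by (field; auto).
      apply Rdiv_lt_0_compat; nra.
    - assert (INR d < INR n) by (apply lt_INR; lia). assert (0 < INR n) by (apply lt_0_INR; lia).
      assert (0 < PI) by apply PI_RGT_0.
      replace (2 * PI * INR d / INR n / 2) with (PI * INR d / INR n) by (field; auto).
      apply Rmult_lt_reg_r with (INR n); auto. unfold Rdiv. rewrite Rmult_assoc, Rinv_l by auto. nra. }
  assert (H := tele al n).
  replace ((INR n - 1/2) * al) with (- (al/2) + 2 * INR d * PI) in H by (unfold al; field; auto).
  rewrite sin_period, sin_neg in H.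
  assert (2 * sin (al/2) * sumR n (fun k => cos (INR k * al)) = 0) by lra.
  apply Rmult_integral in H0. destruct H0; auto. lra.
Qed.

Lemma orth n p q : (p < n)%nat -> (q < n)%nat ->
  sumR n (fun k => cos (th n k q - th n k p)) = if Nat.eqb p q then INR n else 0.
Proof.
  intros Hp Hq. assert (Hn : INR n <> 0) by (apply not_0_INR; lia).
  destruct (Nat.eqb_spec p q).
  - subst. rewrite (sumR_ext _ _ (fun _ => 1)). apply sumR_const1. intros. rewrite Rminus_diag, cos_0; auto.
  - destruct (Nat.lt_ge_cases p q).
    + rewrite <- (orth0 n (q - p)) by lia. apply sumR_ext. intros k _. f_equal. unfold th.
      rewrite minus_INR by lia. field; auto.
    + rewrite <- (orth0 n (p - q)) by lia. apply sumR_ext. intros k _. rewrite <- cos_neg. f_equal. unfold th.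
      rewrite minus_INR by lia. field; auto.
Qed.

Lemma inversion n x p : (p < n)%nat ->
  INR n * x p = sumR n (fun k => v_k n k x * cos (th n k p) + vt_k n k x * sin (th n k p)).
Proof.
  intros Hp.
  rewrite (sumR_ext _ _ (fun k => sumR n (fun q => x q * cos (th n k q - th n k p)))).
  2:{ intros k _. unfold v_k, vt_k. rewrite <- !sumR_mult_r, <- sumR_plus. apply sumR_ext. intros q _.
      rewrite cos_minus. unfold th. ring. }
  rewrite sumR_exchange.
  rewrite (sumR_ext _ _ (fun q => if Nat.eqb p q then x p * INR n else 0)).
  - rewrite sumR_delta. destruct (Nat.ltb_spec p n); [ring | lia].
  - intros q Hq. rewrite sumR_mult_l, orth by auto. destruct (Nat.eqb_spec p q); subst; ring.
Qed.

Lemma cs_bound v w t : Rabs (v * cos t + w * sin t) <= Cmod (v, w).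
Proof.
  unfold Cmod; simpl fst; simpl snd. rewrite <- sqrt_Rsqr_abs. apply sqrt_le_1_alt.
  assert (H := sin2_cos2 t). unfold Rsqr in *.
  assert (0 <= (v * sin t - w * cos t) ^ 2) by apply pow2_ge_0. nra.
Qed.

Lemma comp_bound n x p : (p < n)%nat ->
  Rabs (x p) <= / INR n * sumR n (fun k => Cmod (XX n k x)).
Proof.
  intros Hp. assert (Hn : 0 < INR n) by (apply lt_0_INR; lia).
  assert (H : INR n * Rabs (x p) <= sumR n (fun k => Cmod (XX n k x))).
  { replace (INR n * Rabs (x p)) with (Rabs (INR n * x p)) by (rewrite Rabs_mult, Rabs_pos_eq; lra).
    rewrite inversion by auto. eapply Rle_trans. apply sumR_abs. apply sumR_le. intros. apply cs_bound. }
  apply Rmult_le_reg_l with (INR n); auto. rewrite <- Rmult_assoc, Rinv_r by lra. lra.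
Qed.

Lemma ex_series_zero : ex_series (fun _ : nat => 0).
Proof.
  apply ex_series_ext with (fun n => scal 0 ((1/2) ^ n)).
  - intros. unfold scal; simpl. unfold mult; simpl. ring.
  - apply (@ex_series_scal_l R_AbsRing R_NormedModule). apply ex_series_geom. rewrite Rabs_pos_eq; lra.
Qed.

Lemma ratio_series (b : nat -> R) (r : R) (c : Rbar) :
 (forall l, 0 <= b l) -> 0 <= r -> (exists L, forall l, (L <= l)%nat -> b l <> 0) ->
 is_lim_seq (fun l => b l / b (S l)) c -> Rbar_lt (Finite r) c ->
 ex_series (fun l => b l * r ^ l).
Proof.
  intros Hb Hr [L HL] Hlim Hlt.
  destruct (Req_dec r 0) as [Hr0|Hr0].
  { subst. apply ex_series_incr_1. apply ex_series_ext with (fun _ => 0).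
    intros; simpl; ring. apply ex_series_zero. }
  assert (Hrp : 0 < r) by lra.
  apply (ex_series_incr_n _ L).
  assert (Hnz : forall m, b (L + m)%nat * r ^ (L + m) <> 0).
  { intros m. apply Rmult_integral_contrapositive. split. apply HL; lia. apply pow_nonzero; lra. }
  assert (Hc0 : c <> Finite 0).
  { intros E; subst; simpl in Hlt; lra. }
  assert (Hinv := is_lim_seq_inv _ _ Hlim Hc0).
  assert (Hs := is_lim_seq_scal_r _ r _ Hinv).
  apply (is_lim_seq_incr_n _ L) in Hs.
  assert (Hs' : is_lim_seq (fun m => Rabs (b (L + S m)%nat * r ^ (L + S m) / (b (L + m)%nat * r ^ (L + m))))
                 (Rbar_mult (Rbar_inv c) r)).
  { eapply is_lim_seq_ext; [|exact Hs]. intros m. simpl.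
    assert (b (m + L)%nat <> 0) by (apply HL; lia). assert (b (S (m + L)) <> 0) by (apply HL; lia).
    replace (L + S m)%nat with (S (m + L)) by lia. replace (L + m)%nat with (m + L)%nat by lia.
    rewrite Rabs_pos_eq.
    - simpl. field. repeat split; auto. apply pow_nonzero; lra.
    - apply Rmult_le_pos. apply Rmult_le_pos; [apply Hb | apply pow_le; lra].
      apply Rlt_le, Rinv_0_lt_compat. apply Rmult_lt_0_compat; [|apply pow_lt; lra].
      destruct (Hb (m + L)%nat); auto; congruence. }
  destruct c as [c| |]; simpl in Hlt; try tauto.
  - apply ex_series_ext with (fun m => Rabs (b (L + m)%nat * r ^ (L + m))).
    { intros m. apply Rabs_pos_eq. apply Rmult_le_pos; [apply Hb | apply pow_le; lra]. }
    apply ex_series_DAlembert with (/ c * r); auto.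
    + apply Rmult_lt_reg_l with c; [lra|]. rewrite <- Rmult_assoc, Rinv_r by lra. lra.
  - apply ex_series_ext with (fun m => Rabs (b (L + m)%nat * r ^ (L + m))).
    { intros m. apply Rabs_pos_eq. apply Rmult_le_pos; [apply Hb | apply pow_le; lra]. }
    apply ex_series_DAlembert with 0; auto. lra.
    simpl in Hs'. replace (0 * r) with 0 in Hs' by ring. exact Hs'.
Qed.

Lemma Cmod_XX0 n x : Cmod (XX n 0 x) = Rabs (v_plus n x).
Proof.
  unfold XX, v_k, vt_k, v_plus.
  rewrite (sumR_ext _ (fun p => x p * sin _) (fun _ => 0)).
  rewrite sumR_0. rewrite (sumR_ext _ (fun p => x p * cos _) x).
  apply Cmod_R.
  - intros. replace (2 * PI * INR 0 * INR i / INR n) with 0 by (simpl; unfold Rdiv; ring). rewrite cos_0; ring.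
  - intros. replace (2 * PI * INR 0 * INR i / INR n) with 0 by (simpl; unfold Rdiv; ring). rewrite sin_0; ring.
Qed.

Lemma Cmod_XXk n k x : Cmod (XX n k x) = rho_k n k x.
Proof. reflexivity. Qed.

Lemma cs_npi p : cos (INR p * PI) = (-1) ^ p /\ sin (INR p * PI) = 0.
Proof.
  induction p. simpl. rewrite Rmult_0_l, cos_0, sin_0. auto.
  rewrite S_INR. replace ((INR p + 1) * PI) with (INR p * PI + PI) by ring.
  rewrite neg_cos, neg_sin. destruct IHp as [H1 H2]. rewrite H1, H2. simpl. split; ring.
Qed.

Lemma Cmod_XXhalf n m x : n = (2 * m)%nat -> (0 < m)%nat -> Cmod (XX n m x) = Rabs (v_minus n x).
Proof.
  intros En Hm. assert (HmR : INR m <> 0) by (apply not_0_INR; lia).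
  unfold XX, v_k, vt_k, v_minus.
  rewrite (sumR_ext _ (fun p => x p * sin _) (fun _ => 0)).
  rewrite sumR_0. rewrite (sumR_ext _ (fun p => x p * cos _) (fun p => (-1) ^ p * x p)).
  apply Cmod_R.
  - intros. replace (2 * PI * INR m * INR i / INR n) with (INR i * PI) by (subst; rewrite mult_INR; simpl; field; auto).
    rewrite (proj1 (cs_npi i)); ring.
  - intros. replace (2 * PI * INR m * INR i / INR n) with (INR i * PI) by (subst; rewrite mult_INR; simpl; field; auto).
    rewrite (proj2 (cs_npi i)); ring.
Qed.

Lemma Cmod_XXsym n k x : (k <= n)%nat -> (0 < n)%nat -> Cmod (XX n (n - k) x) = Cmod (XX n k x).
Proof.
  intros Hk Hn. assert (HnR : INR n <> 0) by (apply not_0_INR; lia).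
  assert (E : forall p, 2 * PI * INR (n - k) * INR p / INR n = - (2 * PI * INR k * INR p / INR n) + 2 * INR p * PI).
  { intros. rewrite minus_INR by auto. field; auto. }
  unfold XX, v_k, vt_k.
  rewrite (sumR_ext _ (fun p => x p * cos (2 * PI * INR (n - k) * INR p / INR n)) (fun p => x p * cos (2 * PI * INR k * INR p / INR n))).
  rewrite (sumR_ext _ (fun p => x p * sin (2 * PI * INR (n - k) * INR p / INR n)) (fun p => - (x p * sin (2 * PI * INR k * INR p / INR n)))).
  - unfold Cmod; simpl fst; simpl snd. f_equal.
    assert (forall m f, sumR m (fun p => - f p) = - sumR m f).
    { intros m f. induction m; simpl; [ring| rewrite IHm; ring]. }
    rewrite H. ring.
  - intros. rewrite E, sin_period, sin_neg. ring.
  - intros. rewrite E, cos_period, cos_neg. ring.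
Qed.

Lemma series_sumR n (F : nat -> nat -> R) : (forall k, (k < n)%nat -> ex_series (F k)) ->
  forall m, (m <= n)%nat -> ex_series (fun l => sumR m (fun k => F k l)).
Proof.
  intros H m. induction m; intros Hm; simpl.
  - apply ex_series_zero.
  - apply (ex_series_ext (fun l => plus (sumR m (fun k => F k l)) (F m l))). reflexivity.
    apply (@ex_series_plus R_AbsRing R_NormedModule). apply IHm; lia. apply H; lia.
Qed.

Theorem mainTheorem14
  (n : nat) (Hn : (2 <= n)%nat)
  (a : nat -> nat -> R)            (* a l = coefficient a_l, a l p = a_{lp} *)
  (cplus cminus : Rbar) (c : nat -> Rbar)
  (Hnz : exists L : nat, forall l : nat, (L <= l)%nat ->
      v_plus n (a l) <> 0
      /\ (Nat.even n = true -> v_minus n (a l) <> 0)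
      /\ (forall k : nat, (1 <= k <= (n - 1) / 2)%nat -> rho_k n k (a l) <> 0))
  (Hcplus : is_lim_seq
      (fun l => Rabs (v_plus n (a l)) / Rabs (v_plus n (a (S l)))) cplus)
  (Hcminus : Nat.even n = true -> is_lim_seq
      (fun l => Rabs (v_minus n (a l)) / Rabs (v_minus n (a (S l)))) cminus)
  (Hck : forall k : nat, (1 <= k <= (n - 1) / 2)%nat -> is_lim_seq
      (fun l => rho_k n k (a l) / rho_k n k (a (S l))) (c k))
  (u : nat -> R)
  (Huplus : Rbar_lt (Finite (Rabs (v_plus n u))) cplus)
  (Huminus : Nat.even n = true -> Rbar_lt (Finite (Rabs (v_minus n u))) cminus)
  (Huk : forall k : nat, (1 <= k <= (n - 1) / 2)%nat ->
      Rbar_lt (Finite (rho_k n k u)) (c k)) :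
  forall p : nat, (p < n)%nat ->
    ex_series (fun l => Rabs (nc_mul n (a l) (nc_pow n u l) p)).
Proof.
  intros p Hp.
  assert (Hn0 : (0 < n)%nat) by lia.
  destruct Hnz as [L HL].
  assert (Hrho : forall k, (1 <= k <= (n - 1) / 2)%nat ->
            ex_series (fun l => rho_k n k (a l) * rho_k n k u ^ l)).
  { intros k Hk. apply ratio_series with (c k); auto.
    - intros; apply sqrt_pos.
    - apply sqrt_pos.
    - exists L. intros l Hl. apply (HL l Hl); auto. }
  assert (HK : forall k, (k < n)%nat -> ex_series (fun l => Cmod (XX n k (a l)) * Cmod (XX n k u) ^ l)).
  { intros k Hk.
    set (h := ((n - 1) / 2)%nat).
    assert (Hh : (2 * h <= n - 1 < 2 * h + 2)%nat).
    { unfold h. pose proof (Nat.div_mod (n - 1) 2). pose proof (Nat.mod_upper_bound (n - 1) 2). lia. }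
    destruct (Nat.eq_dec k 0) as [->|Hk0].
    { apply ex_series_ext with (fun l => Rabs (v_plus n (a l)) * Rabs (v_plus n u) ^ l).
      { intros; rewrite !Cmod_XX0; auto. }
      apply ratio_series with cplus; auto.
      - intros; apply Rabs_pos.
      - apply Rabs_pos.
      - exists L. intros l Hl. apply Rabs_no_R0, (HL l Hl). }
    destruct (Compare_dec.le_lt_dec k h) as [Hkh|Hkh].
    { apply (Hrho k). unfold h in *; lia. }
    destruct (Nat.eq_dec n (2 * k)) as [E|E].
    { assert (Ev : Nat.even n = true) by (apply Nat.even_spec; exists k; lia).
      apply ex_series_ext with (fun l => Rabs (v_minus n (a l)) * Rabs (v_minus n u) ^ l).
      { intros; rewrite !(Cmod_XXhalf n k) by (auto; lia); auto. }
      apply ratio_series with cminus; auto.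
      - intros; apply Rabs_pos.
      - apply Rabs_pos.
      - exists L. intros l Hl. apply Rabs_no_R0, (HL l Hl); auto. }
    apply ex_series_ext with (fun l => rho_k n (n - k) (a l) * rho_k n (n - k) u ^ l).
    { intros. rewrite <- !Cmod_XXk, !Cmod_XXsym by lia. reflexivity. }
    apply Hrho. unfold h in *; lia. }
  apply (@ex_series_le R_AbsRing R_CompleteNormedModule) with (fun l => / INR n * sumR n (fun k => Cmod (XX n k (a l)) * Cmod (XX n k u) ^ l)).
  - intros l. change (norm (Rabs (nc_mul n (a l) (nc_pow n u l) p))) with (Rabs (Rabs (nc_mul n (a l) (nc_pow n u l) p))).
    rewrite Rabs_Rabsolu. eapply Rle_trans. apply (comp_bound n); auto.
    apply Req_le. f_equal. apply sumR_ext. intros k _.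
    rewrite XX_mul, XX_pow, Cmod_mult, Cmod_pow by auto. reflexivity.
  - apply (ex_series_ext (fun l => scal (/ INR n) (sumR n (fun k => Cmod (XX n k (a l)) * Cmod (XX n k u) ^ l)))).
    reflexivity.
    apply (@ex_series_scal_l R_AbsRing R_NormedModule).
    apply (series_sumR n (fun k l => Cmod (XX n k (a l)) * Cmod (XX n k u) ^ l)); auto.
Qed.
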